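(* Let $q\ge1$. Let $0=s_0<s_1<\dots<s_q=1$ be nodes and $\{\lambda_n^{[q]}\}_{n=0}^q$ the corresponding Lagrange basis of $\mathcal{P}^q([0,1])$, and let $\{\lambda_m^{[q-1]}\}_{m=0}^{q-1}$ be the Lagrange basis of $\mathcal{P}^{q-1}([0,1])$ with respect to some set of $q$ distinct nodes in $[0,1]$. Define $a_{mn}=\int_0^1\dot\lambda_n^{[q]}(t)\lambda_{m-1}^{[q-1]}(t)\,dt$ for $m=1,\dots,q$, $n=0,\dots,q$, let $A=(a_{mn})_{m,n=1}^q$ (which is invertible) and $\bar A=(\bar a_{mn})=A^{-1}$. Then for every $m=1,\dots,q$, $$\sum_{n=1}^q\bar a_{mn}a_{n0}=-1.$$
   Context: $\mathcal{P}^q([0,1])$ is the space of polynomials of degree $\le q$ on $[0,1]$; the Lagrange basis for nodes $s_0,\dots,s_q$ is $\lambda_n(s)=\prod_{l\ne n}(s-s_l)/(s_n-s_l)$. *)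

(* Defs.v *)
From HB Require Import structures.
From mathcomp Require Import all_boot all_order all_algebra.
From mathcomp Require Import all_classical all_reals all_analysis.
Set Implicit Arguments. Unset Strict Implicit. Unset Printing Implicit Defensive.
Import Order.TTheory GRing.Theory Num.Theory.
Local Open Scope ring_scope.

Definition lagrange_basis (F : fieldType) (k : nat) (x : 'I_k -> F) (n : 'I_k)
  : {poly F} :=
  \prod_(l < k | l != n) (('X - (x l)%:P) * ((x n - x l)^-1)%:P).

Definition int01 (R : realType) (p : {poly R}) : R :=
  Rintegral lebesgue_measure `[0%R, 1%R]%classic (fun t => p.[t]).

(* Main.v *)
Require Import Defs.
From HB Require Import structures.
From mathcomp Require Import all_boot all_order all_algebra.
From mathcomp Require Import all_classical all_reals all_analysis.
From mathcomp Require Import ring polyrcf.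
Import Order.TTheory GRing.Theory Num.Theory.
Import numFieldNormedType.Exports.
Local Open Scope ring_scope.

Section Lag.
Variable (F : fieldType) (k : nat) (x : 'I_k -> F).
Hypothesis xinj : injective x.

Lemma lag_factor_size (n l : 'I_k) : l != n ->
  size (('X - (x l)%:P) * ((x n - x l)^-1)%:P) = 2%N.
Proof.
move=> ln; rewrite mulrC mul_polyC size_scale ?size_XsubC //.
rewrite invr_eq0 subr_eq0; apply/eqP => /xinj e; by rewrite e eqxx in ln.
Qed.

Lemma size_lag n : (size (lagrange_basis x n) <= k)%N.
Proof.
rewrite /lagrange_basis size_prod; last first.
  move=> l ln; by rewrite -size_poly_eq0 lag_factor_size.
rewrite (eq_bigr (fun _ => 2%N)); last by move=> l ln; rewrite lag_factor_size.
rewrite sum_nat_const.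
have -> : #|[pred l : 'I_k | l != n]| = k.-1.
  by rewrite -[in RHS](card_ord k) -(cardC1 n); apply: eq_card => l.
case: k n => [[]//|m n] /=.
rewrite subSn ?leq_pmulr // mulnC mul2n -addnn addnK //.
Qed.

Lemma lag_eval n j : (lagrange_basis x n).[x j] = (j == n)%:R.
Proof.
rewrite /lagrange_basis horner_prod.
have [->|jn] := eqVneq j n.
  apply: big1 => l ln; rewrite !hornerE divff // subr_eq0.
  by apply/eqP => /xinj e; rewrite e eqxx in ln.
rewrite (bigD1 j) //= !hornerE subrr mul0r mul0r //.
Qed.

Lemma lag_interp (p : {poly F}) : (size p <= k)%N ->
  p = \sum_(n < k) p.[x n] *: lagrange_basis x n.
Proof.
move=> sp; apply/eqP; rewrite -subr_eq0; apply/eqP.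
set d := _ - _.
have sd : (size d <= k)%N.
  rewrite /d (leq_trans (size_polyD _ _)) // geq_max sp size_polyN.
  apply: (big_ind (fun p : {poly F} => (size p <= k)%N)) => //.
  - by rewrite size_poly0.
  - by move=> p1 p2 h1 h2; rewrite (leq_trans (size_polyD _ _)) // geq_max h1.
  - by move=> n _; rewrite (leq_trans (size_scale_leq _ _)) // size_lag.
apply: (@roots_geq_poly_eq0 _ d [seq x i | i <- enum 'I_k]).
- apply/allP => _ /mapP [j _ ->]; rewrite /root /d !hornerE horner_sum.
  rewrite (bigD1 j) //= big1 ?addr0; last first.
    by move=> n nj; rewrite hornerZ lag_eval eq_sym (negbTE nj) mulr0.
  by rewrite hornerZ lag_eval eqxx mulr1 subrr.
- by rewrite map_inj_uniq ?enum_uniq.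
- by rewrite size_map size_enum_ord.
Qed.

End Lag.
Section Ana.
Variable R : realType.

Lemma int01_prim {p P : {poly R}} : P^`() = p ->
  int01 p = P.[1] - P.[0].
Proof.
move=> hP; rewrite /int01 /Rintegral.
rewrite (@continuous_FTC2 _ (horner p) (horner P) 0 1) //=.
- have hc : continuous (horner p) by move=> x; exact: continuous_horner.
  exact: continuous_subspaceT hc.
- split.
  + by move=> x _; exact: derivable_horner.
  + apply: cvg_at_right_filter; exact: continuous_horner.
  + apply: cvg_at_left_filter; exact: continuous_horner.
- by move=> x _; rewrite -derivE hP.
Qed.

Lemma prim_ex (p : {poly R}) : exists P : {poly R}, P^`() = p.
Proof.
exists (\poly_(i < (size p).+1) (if i is j.+1 then p`_j / j.+1%:R else 0)).
apply/polyP => i; rewrite coef_deriv coef_poly ltnS.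
case: ltnP => hi.
  by rewrite -[_ *+ i.+1]mulr_natr -mulrA mulVf ?mulr1 // pnatr_eq0.
by rewrite mul0rn nth_default.
Qed.

Lemma int01D (p1 p2 : {poly R}) : int01 (p1 + p2) = int01 p1 + int01 p2.
Proof.
have [P1 h1] := prim_ex p1; have [P2 h2] := prim_ex p2.
rewrite (int01_prim h1) (int01_prim h2) (int01_prim (P := P1 + P2)) ?derivD ?h1 ?h2 //.
rewrite !hornerD; ring.
Qed.

Lemma int01Z c (p : {poly R}) : int01 (c *: p) = c * int01 p.
Proof.
have [P h] := prim_ex p.
rewrite (int01_prim h) (int01_prim (P := c *: P)) ?derivZ ?h //.
rewrite !hornerZ; ring.
Qed.

Lemma int01_0 : int01 (0 : {poly R}) = 0.
Proof. by rewrite -(scale0r 0) int01Z mul0r. Qed.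

Lemma int01N (p : {poly R}) : int01 (- p) = - int01 p.
Proof. by rewrite -scaleN1r int01Z mulN1r. Qed.

Lemma int01_sum I (r : seq I) (P : pred I) (f : I -> {poly R}) :
  int01 (\sum_(i <- r | P i) f i) = \sum_(i <- r | P i) int01 (f i).
Proof. exact: (big_morph _ int01D int01_0). Qed.

Lemma int01_sq0 (h : {poly R}) : int01 (h * h) = 0 -> h = 0.
Proof.
have [P hP] := prim_ex (h * h).
rewrite (int01_prim hP) => /eqP; rewrite subr_eq0 => /eqP P10.
have mono := @ler_hornerW R 0 1 P.
have hmono : {in `[0, 1] &, {homo horner P : x y / x <= y}}.
  apply: mono => y _; rewrite hP hornerM; exact: mulr_ge0_le0 || by rewrite -expr2 sqr_ge0.
have cst : forall y, 0 <= y <= 1 -> P.[y] = P.[0].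
  move=> y /andP[y0 y1]; apply/eqP; rewrite eq_le; apply/andP; split.
    rewrite -P10; apply: hmono => //; by rewrite in_itv /= ?y0 ?y1 ?ler01 ?lexx.
  apply: hmono => //; by rewrite in_itv /= ?y0 ?y1 ?ler01 ?lexx.
set Q := P - (P.[0])%:P.
have Q0 : Q = 0.
  apply: (@roots_geq_poly_eq0 _ Q [seq (i.+1%:R)^-1 | i <- iota 0 (size Q)]).
  - apply/allP => _ /mapP [i _ ->]; rewrite /root /Q !hornerE cst ?subrr //.
    by rewrite invr_ge0 ler0n /= invf_le1 ?ltr0Sn // ler1n.
  - rewrite map_inj_in_uniq ?iota_uniq // => i j _ _ /invr_inj /eqP.
    by rewrite eqr_nat => /eqP [].
  - by rewrite size_map size_iota.
have : P^`() = 0.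
  suff -> : P = (P.[0])%:P by rewrite derivC.
  by apply/eqP; rewrite -subr_eq0 -/Q Q0.
rewrite hP => /eqP; rewrite mulf_eq0 orbb => /eqP //.
Qed.
End Ana.

Theorem lemmaA1 (R : realType) (q : nat) (hq : (0 < q)%N)
  (s : 'I_q.+1 -> R) (r : 'I_q -> R)
  (hs0 : s ord0 = 0) (hsq : s ord_max = 1)
  (hsinc : forall i j : 'I_q.+1, (i < j)%N -> s i < s j)
  (hrinj : injective r) (hr01 : forall i, 0 <= r i <= 1) :
  let a (m : 'I_q) (n : 'I_q.+1) :=
    int01 ((lagrange_basis s n)^`() * lagrange_basis r m) in
  let A : 'M[R]_q := \matrix_(i < q, j < q) a i (lift ord0 j) in
  A \in unitmx /\
  forall m : 'I_q, \sum_(n < q) (invmx A) m n * a n ord0 = -1.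
Proof.
move=> a A.
have sinj : injective s.
  move=> i j e; apply/eqP; case: (ltngtP i j) => [ij|ji|/val_inj -> //].
  - by have := hsinc _ _ ij; rewrite e ltxx.
  - by have := hsinc _ _ ji; rewrite e ltxx.
have derivS : forall I (rr : seq I) (P : pred I) (f : I -> {poly R}),
    (\sum_(i <- rr | P i) f i)^`() = \sum_(i <- rr | P i) (f i)^`().
  by move=> I rr P f; apply: (big_morph _ (@derivD R) (@deriv0 R)).
have hsum : \sum_(n < q.+1) lagrange_basis s n = 1.
  rewrite [RHS](@lag_interp _ _ _ sinj 1) ?size_poly1 //.
  by apply: eq_bigr => n _; rewrite hornerC scale1r.
have ha0 : forall m, a m ord0 = - \sum_(j < q) A m j.
  move=> m.
  have := congr1 (@deriv R) hsum; rewrite derivS -polyC1 derivC big_ord_recl.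
  move/eqP; rewrite addr_eq0 => /eqP h0.
  rewrite /a h0 mulNr int01N mulr_suml int01_sum; congr (- _).
  by apply: eq_bigr => j _; rewrite /A mxE.
have hunit : A \in unitmx.
  rewrite unitmxE unitfE -det_tr; apply/negP => /det0P [v v0 vA].
  move/negP: v0; apply.
  set p := \sum_(j < q) v 0 j *: lagrange_basis s (lift ord0 j).
  have hm : forall m, int01 (p^`() * lagrange_basis r m) = 0.
    move=> m; have := congr1 (fun M : 'rV[R]_q => M 0 m) vA; rewrite !mxE => <-.
    rewrite /p derivS mulr_suml int01_sum; apply: eq_bigr => j _.
    by rewrite derivZ -scalerAl int01Z !mxE.
  have sp : (size p <= q.+1)%N.
    apply: (big_ind (fun p : {poly R} => (size p <= q.+1)%N)) => //.
    - by rewrite size_poly0.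
    - by move=> p1 p2 h1 h2; rewrite (leq_trans (size_polyD _ _)) // geq_max h1.
    - by move=> n _; rewrite (leq_trans (size_scale_leq _ _)) // size_lag.
  have g0 : p^`() = 0.
    apply: int01_sq0.
    have sg : (size p^`() <= q)%N.
      have [->|pn0] := eqVneq p 0; first by rewrite deriv0 size_poly0.
      by rewrite -ltnS (leq_trans (lt_size_deriv pn0)).
    rewrite {2}(@lag_interp _ _ _ hrinj _ sg) mulr_sumr int01_sum big1 // => m _.
    by rewrite -scalerAr int01Z hm mulr0.
  have p0 : p = 0.
    have pc : p = (p`_0)%:P.
      apply/polyP => i; rewrite coefC; case: i => [//|i] /=.
      have := congr1 (fun u : {poly R} => u`_i) g0; rewrite /= coef_deriv coef0.
      by move/eqP; rewrite mulrn_eq0 /= => /eqP.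
    have : p.[s ord0] = 0.
      rewrite /p horner_sum big1 // => j _.
      by rewrite hornerZ (@lag_eval _ _ _ sinj) mulr0.
    by move=> h; rewrite pc -[p`_0](hornerC _ (s ord0)) -pc h.
  apply/eqP/rowP => j; rewrite !mxE.
  have := congr1 (horner^~ (s (lift ord0 j))) p0.
  rewrite /= horner0 /p horner_sum (bigD1 j) //= big1 ?addr0.
    by rewrite hornerZ (@lag_eval _ _ _ sinj) eqxx mulr1.
  by move=> i ij; rewrite hornerZ (@lag_eval _ _ _ sinj) (inj_eq (@lift_inj _ ord0)) eq_sym (negbTE ij) mulr0.
split => // m.
under eq_bigr do rewrite ha0 mulrN mulr_sumr.
rewrite sumrN exchange_big /=; congr (- _).
transitivity (\sum_(j < q) (invmx A *m A) m j).
  by apply: eq_bigr => j _; rewrite mxE.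
rewrite mulVmx // (bigD1 m) //= big1 ?addr0 ?mxE ?eqxx //.
by move=> j jm; rewrite mxE eq_sym (negbTE jm).
Qed.
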